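(* Let $\vec r:\mathbb{Z}\to\mathbb{R}^3$ be a discrete centroaffine space curve with constant invariants $\kappa_n=\kappa$, $\bar\kappa_n=\bar\kappa$, $\tau_n=\tau$, let $\alpha\in(0,1)$ be a constant, and define $\vec r'_n=(1-\alpha)\vec r_n+\alpha\vec r_{n+1}$ (iteration of the definite proportional division point). If $\vec r'$ is again a discrete centroaffine space curve, then its invariants satisfy $\kappa'_n=\kappa$, $\bar\kappa'_n=\bar\kappa$, $\tau'_n=\tau$ for all $n$.
   Context: A discrete centroaffine space curve is a map $\vec r:\mathbb{Z}\to\mathbb{R}^3$ with $[\vec r_{k-1},\vec r_k,\vec r_{k+1}]\ne0$ for all $k$, where $\vec r_k=\vec r(k)$, $[\cdot,\cdot,\cdot]$ is the $3\times3$ determinant and $\vec t_k=\vec r_{k+1}-\vec r_k$. With $D_k=[\vec r_{k-1},\vec r_k,\vec r_{k+1}]$: $\kappa_k=\frac{[\vec r_k,\vec r_{k+1},\vec r_{k+2}]}{D_k}$, $\bar\kappa_k=\frac{[\vec r_{k+1},\vec t_{k-1},\vec t_{k+1}]}{D_k}$, $\tau_k=\frac{[\vec t_{k-1},\vec t_k,\vec t_{k+1}]}{D_k}$ (first/second centroaffine curvature and centroaffine torsion). *)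

(* Defs.v *)
From HB Require Import structures.
From mathcomp Require Import all_boot all_order all_algebra.
Set Implicit Arguments. Unset Strict Implicit. Unset Printing Implicit Defensive.
Import Order.TTheory GRing.Theory Num.Theory.
Local Open Scope ring_scope.

Definition det3 (R : realFieldType) (u v w : 'rV[R]_3) : R :=
  \det (\matrix_(i < 3, j < 3)
          (if i == 0 :> nat then u ord0 j
           else if i == 1 :> nat then v ord0 j else w ord0 j)).

Definition tangent (R : realFieldType) (r : int -> 'rV[R]_3) (k : int) : 'rV[R]_3 :=
  r (k + 1) - r k.

Definition Dk (R : realFieldType) (r : int -> 'rV[R]_3) (k : int) : R :=
  det3 (r (k - 1)) (r k) (r (k + 1)).

Definition centroaffine_curve (R : realFieldType) (r : int -> 'rV[R]_3) : Prop :=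
  forall k : int, Dk r k != 0.

Definition ca_kappa (R : realFieldType) (r : int -> 'rV[R]_3) (k : int) : R :=
  det3 (r k) (r (k + 1)) (r (k + 2)) / Dk r k.

Definition ca_kappabar (R : realFieldType) (r : int -> 'rV[R]_3) (k : int) : R :=
  det3 (r (k + 1)) (tangent r (k - 1)) (tangent r (k + 1)) / Dk r k.

Definition ca_tau (R : realFieldType) (r : int -> 'rV[R]_3) (k : int) : R :=
  det3 (tangent r (k - 1)) (tangent r k) (tangent r (k + 1)) / Dk r k.

Definition division_curve (R : realFieldType) (a : R) (r : int -> 'rV[R]_3) :
  int -> 'rV[R]_3 := fun n => (1 - a) *: r n + a *: r (n + 1).

(* Main.v *)
Require Import Defs.
From HB Require Import structures.
From mathcomp Require Import all_boot all_order all_algebra ring.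
Import Order.TTheory GRing.Theory Num.Theory.
Local Open Scope ring_scope.

Definition co {R : realFieldType} (u : 'rV[R]_3) (k : nat) : R := u ord0 (inord k).
Lemma coE (R : realFieldType) (u : 'rV[R]_3) j : u ord0 j = co u j.
Proof. by rewrite /co inord_val. Qed.
Lemma coD (R : realFieldType) (u v : 'rV[R]_3) k : co (u + v) k = co u k + co v k.
Proof. by rewrite /co mxE. Qed.
Lemma coB (R : realFieldType) (u v : 'rV[R]_3) k : co (u - v) k = co u k - co v k.
Proof. by rewrite /co !mxE. Qed.
Lemma coN (R : realFieldType) (u : 'rV[R]_3) k : co (- u) k = - co u k.
Proof. by rewrite /co mxE. Qed.
Lemma coZ (R : realFieldType) (a : R) (u : 'rV[R]_3) k : co (a *: u) k = a * co u k.
Proof. by rewrite /co mxE. Qed.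

Lemma det3E (R : realFieldType) (u v w : 'rV[R]_3) : det3 u v w =
  co u 0 * (co v 1 * co w 2 - co v 2 * co w 1)
 - co u 1 * (co v 0 * co w 2 - co v 2 * co w 0)
 + co u 2 * (co v 0 * co w 1 - co v 1 * co w 0).
Proof.
rewrite /det3 (expand_det_row _ ord0) !big_ord_recl big_ord0 /cofactor.
rewrite !(expand_det_row _ ord0) !big_ord_recl !big_ord0 /cofactor.
rewrite !det_mx11 !mxE /= !coE /= /bump /=.
ring.
Qed.

Lemma inv_of_rec (R : realFieldType) (s : int -> 'rV[R]_3) k a b c :
  Dk s k != 0 -> s (k + 2) = a *: s (k + 1) + b *: s k + c *: s (k - 1) ->
  [/\ ca_kappa s k = c, ca_kappabar s k = - c - b & ca_tau s k = a - 1 + b + c].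
Proof.
move=> hD hs.
rewrite /ca_kappa /ca_kappabar /ca_tau /tangent.
have -> : k - 1 + 1 = k by rewrite subrK.
have -> : k + 1 + 1 = k + 2 by rewrite -addrA.
rewrite /Dk in hD *; rewrite hs !det3E ?coD ?coB ?coN ?coZ in hD *.
split; field; exact: hD.
Qed.

Lemma rec_of_inv (R : realFieldType) (r : int -> 'rV[R]_3) k :
  Dk r k != 0 ->
  r (k + 2) = (ca_tau r k + 1 + ca_kappabar r k) *: r (k + 1)
     + (- ca_kappabar r k - ca_kappa r k) *: r k + ca_kappa r k *: r (k - 1).
Proof.
rewrite /ca_kappa /ca_kappabar /ca_tau /tangent /Dk.
have -> : k - 1 + 1 = k by rewrite subrK.
have -> : k + 1 + 1 = k + 2 by rewrite -addrA.
move=> hD; apply/rowP => j.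
rewrite !mxE !coE.
move: hD; rewrite !det3E => hD.
have : (j : nat) = 0%N \/ (j : nat) = 1%N \/ (j : nat) = 2%N.
  by case: j => [[|[|[|//]]] ?] /=; auto.
move=> [->|[->|->]]. all: rewrite ?det3E ?coD ?coB ?coN ?coZ; field; exact: hD.
Qed.

Theorem proposition7p2 (R : realFieldType) (r : int -> 'rV[R]_3)
  (kappa kappabar tau alpha : R) :
  centroaffine_curve r ->
  (forall n : int, ca_kappa r n = kappa) ->
  (forall n : int, ca_kappabar r n = kappabar) ->
  (forall n : int, ca_tau r n = tau) ->
  0 < alpha < 1 ->
  centroaffine_curve (division_curve alpha r) ->
  forall n : int,
    [/\ ca_kappa (division_curve alpha r) n = kappa,
        ca_kappabar (division_curve alpha r) n = kappabar &
        ca_tau (division_curve alpha r) n = tau].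
Proof.
move=> hc hk hkb ht _ hc' n.
have rec : forall k, r (k + 2) = (tau + 1 + kappabar) *: r (k + 1)
     + (- kappabar - kappa) *: r k + kappa *: r (k - 1).
  by move=> k; rewrite -(hk k) -(hkb k) -(ht k); apply: rec_of_inv.
have rec' : division_curve alpha r (n + 2) =
   (tau + 1 + kappabar) *: division_curve alpha r (n + 1)
     + (- kappabar - kappa) *: division_curve alpha r n
     + kappa *: division_curve alpha r (n - 1).
  rewrite /division_curve.
  have -> : n + 2 + 1 = (n + 1) + 2 by ring.
  have -> : n + 1 + 1 = n + 2 by rewrite -addrA.
  have -> : n - 1 + 1 = n by rewrite subrK.
  rewrite (rec (n + 1)).
  have -> : n + 1 + 1 = n + 2 by rewrite -addrA.
  have -> : n + 1 - 1 = n by rewrite addrK.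
  rewrite (rec n).
  apply/rowP => j; rewrite !mxE; ring.
have [-> -> ->] := @inv_of_rec _ _ _ _ _ _ (hc' n) rec'.
split; ring.
Qed.
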